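(* Let $n\ge 1$, $\nu\ge 1$ be integers and $\delta\in\{0,1,2\}$. If $[a_1,a_2,\ldots,a_{2\nu+\delta}]$ is a vertex of the orthogonal graph $\mathcal{O}^{(2\nu+\delta)}_{2^n}$, then $a_i\in\mathbb{Z}_{2^n}^\times$ for some $i\in\{1,2,\ldots,2\nu\}$.
   Context: Let $V^{2\nu+\delta}$ be the set of tuples $\vec a=(a_1,\ldots,a_{2\nu+\delta})\in(\mathbb{Z}_{2^n})^{2\nu+\delta}$ such that some $a_i$ is a unit of $\mathbb{Z}_{2^n}$. Write $\vec a\sim\vec b$ if $\vec a=\lambda\vec b$ for some $\lambda\in\mathbb{Z}_{2^n}^\times$, let $[\vec a]=[a_1,\ldots,a_{2\nu+\delta}]$ denote the equivalence class and $V^{2\nu+\delta}_\sim$ the set of classes. Let $G_{2\nu+\delta,\Delta}$ be the $(2\nu+\delta)\times(2\nu+\delta)$ block-diagonal-type matrix over $\mathbb{Z}_{2^n}$ given by $\begin{pmatrix}0&I_\nu&\\ &0&\\ &&\Delta\end{pmatrix}$ (the first two block rows/columns of size $\nu$, all unspecified blocks zero), where $\Delta$ is empty if $\delta=0$, $\Delta=(1)$ if $\delta=1$, and $\Delta=\begin{pmatrix}z&1\\0&z\end{pmatrix}$ if $\delta=2$, with $z$ a fixed unit of $\mathbb{Z}_{2^n}$ (equivalently, $z\notin\{x^2+x:x\in\mathbb{Z}_{2^n}\}$). The orthogonal graph $\mathcal{O}^{(2\nu+\delta)}_{2^n}$ has vertex set $\{[\vec a]\in V^{2\nu+\delta}_\sim:\vec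 a\,G_{2\nu+\delta,\Delta}\,\vec a^t=0\}$, and $[\vec a]$ is adjacent to $[\vec b]$ iff $\vec a\,(G_{2\nu+\delta,\Delta}+G_{2\nu+\delta,\Delta}^t)\,\vec b^t\in\mathbb{Z}_{2^n}^\times$. *)

(* Defs.v *)
From HB Require Import structures.
From mathcomp Require Import all_boot all_order all_algebra.
Set Implicit Arguments. Unset Strict Implicit. Unset Printing Implicit Defensive.
Import GRing.Theory.
Local Open Scope ring_scope.

Definition Delta_entry (R : nzRingType) (delta : nat) (z : R) (k l : nat) : R :=
  match delta with
  | 1%N => if (k == 0%N) && (l == 0%N) then 1 else 0
  | 2%N => if k == l then z else if (k == 0%N) && (l == 1%N) then 1 else 0
  | _ => 0
  end.

(* G_{2nu+delta,Delta} = [[0, I_nu, 0], [0, 0, 0], [0, 0, Delta]]. *)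
Definition Gmat (R : nzRingType) (nu delta : nat) (z : R) : 'M[R]_(2 * nu + delta) :=
  \matrix_(i < 2 * nu + delta, j < 2 * nu + delta)
    if (nat_of_ord i < nu)%N && (nat_of_ord j == (nat_of_ord i + nu)%N) then 1
    else if (2 * nu <= nat_of_ord i)%N && (2 * nu <= nat_of_ord j)%N
         then Delta_entry delta z (nat_of_ord i - 2 * nu)%N (nat_of_ord j - 2 * nu)%N
         else 0.

(* A representative a of a vertex [a] of the orthogonal graph:
   some coordinate of a is a unit (a in V) and a G a^t = 0.
   Being a vertex is invariant under scaling by units, so this
   predicate on representatives describes the vertex set. *)
Definition is_orth_vertex (R : comUnitRingType) (nu delta : nat) (z : R)
  (a : 'rV[R]_(2 * nu + delta)) : Prop :=
  (exists i, a 0 i \is a GRing.unit) /\ a *m Gmat nu delta z *m a^T = 0.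
Arguments is_orth_vertex [R] nu delta z a.

(* Main.v *)
Require Import Defs.
From mathcomp Require Import all_boot all_order all_algebra.
From mathcomp Require Import zify.
Import GRing.Theory.
Local Open Scope ring_scope.

Definition par {p' : nat} (x : 'I_p'.+2) : bool := odd x.

Lemma parD p' (x y : 'I_p'.+2) : ~~ odd p' -> par (x + y) = par x (+) par y.
Proof.
move=> hp; rewrite /par.
have -> : val (x + y) = ((x + y) %% p'.+2)%N by [].
rewrite odd_mod; last by rewrite /= negbK (negbTE hp).
exact: oddD.
Qed.
Lemma parM p' (x y : 'I_p'.+2) : ~~ odd p' -> par (x * y) = par x && par y.
Proof.
move=> hp; rewrite /par.
have -> : val (x * y) = ((x * y) %% p'.+2)%N by [].
rewrite odd_mod; last by rewrite /= negbK (negbTE hp).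
exact: oddM.
Qed.

Lemma par0 p' : par (0 : 'I_p'.+2) = false. Proof. by []. Qed.
Lemma par1 p' : par (1 : 'I_p'.+2) = true. Proof. by []. Qed.

Lemma par_sum p' I (r : seq I) (P : pred I) (F : I -> 'I_p'.+2) : ~~ odd p' ->
  par (\sum_(i <- r | P i) F i) = \big[addb/false]_(i <- r | P i) par (F i).
Proof.
move=> hp; apply: (big_morph (@par p')) => // x y; exact: parD.
Qed.

Lemma par_unit n (x : 'Z_(2 ^ n)) : (1 <= n)%N -> (x \is a GRing.unit) = par x.
Proof.
Proof.
move=> hn; rewrite -[in LHS](natr_Zp x) unitZpE; last by rewrite -{1}(expn0 2) ltn_exp2l.
by rewrite coprime_pexpl // coprime2n.
Qed.

Lemma G_lr (R : nzRingType) nu delta (z : R) (k : 'I_(2 * nu)) (j : 'I_delta) :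
  Gmat nu delta z (lshift delta k) (rshift (2 * nu) j) = 0.
Proof.
rewrite /Gmat mxE /=.
have hk := ltn_ord k.
case: ifP => [/andP [h1 /eqP h2]|_]; first by exfalso; move: h1 h2; lia.
by rewrite leqNgt hk.
Qed.

Lemma G_rr (R : nzRingType) nu delta (z : R) (k j : 'I_delta) :
  Gmat nu delta z (rshift (2 * nu) k) (rshift (2 * nu) j) = Delta_entry delta z k j.
Proof.
rewrite /Gmat mxE /=.
case: ifP => [/andP [h1 _]|_]; first by exfalso; move: h1; lia.
by rewrite !leq_addr /= !addKn.
Qed.

Lemma core n nu delta (z : 'Z_(2 ^ n)) (a : 'rV['Z_(2 ^ n)]_(2 * nu + delta)) :
  (1 <= n)%N ->
  (forall i : 'I_(2 * nu + delta), (i < 2 * nu)%N -> par (a 0 i) = false) ->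
  a *m Gmat nu delta z *m a^T = 0 ->
  \big[addb/false]_(j < delta)
     ((\big[addb/false]_(k < delta)
         (par (a 0 (rshift _ k)) && par (Delta_entry delta z k j)))
      && par (a 0 (rshift _ j))) = false.
Proof.
move=> hn hev hQ.
have hp : ~~ odd (Zp_trunc (2 ^ n)).
  have := Zp_cast (p := (2 ^ n)%N); rewrite -{1}(expn0 2) ltn_exp2l // => /(_ hn) e.
  have : ~~ odd (Zp_trunc (2 ^ n)).+2 by rewrite e oddX negb_or -lt0n hn.
  by rewrite /= negbK.
have := congr1 (fun M : 'M['Z_(2 ^ n)]_1 => par (M 0 0)) hQ.
rewrite /= mxE par_sum //; rewrite [X in _ = par X -> _]mxE par0.
under eq_bigr => j _ do rewrite parM // mxE mxE par_sum //.
rewrite big_split_ord /= big1 /=; last by move=> j _; rewrite (hev (lshift delta j)) ?andbF // /=.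
move=> h; rewrite -[RHS]h; apply: eq_bigr => j _; congr (_ && _).
rewrite [RHS]big_split_ord [X in _ = X (+) _]big1 => [|k _] /=.
  by apply: eq_bigr => k _; rewrite parM // G_rr.
by rewrite parM // G_lr par0 andbF.
Qed.

Theorem lemma2p1 (n nu delta : nat) (z : 'Z_(2 ^ n))
  (a : 'rV['Z_(2 ^ n)]_(2 * nu + delta)) :
  (1 <= n)%N -> (1 <= nu)%N -> (delta <= 2)%N ->
  z \is a GRing.unit ->
  is_orth_vertex nu delta z a ->
  exists i : 'I_(2 * nu + delta), (i < 2 * nu)%N /\ a 0 i \is a GRing.unit.
Proof.
move=> hn hnu hd hz [[i0 hi0] hQ].
case: (boolP [exists i : 'I_(2 * nu + delta), (i < 2 * nu)%N && (a 0 i \is a GRing.unit)]).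
  by case/existsP => i /andP [h1 h2]; exists i.
move=> hne; exfalso.
have hev : forall i : 'I_(2 * nu + delta), (i < 2 * nu)%N -> par (a 0 i) = false.
  move=> i hi; apply/negbTE; rewrite -par_unit //; apply: contra hne => hu.
  by apply/existsP; exists i; rewrite hi hu.
have := @core n nu delta z a hn hev hQ.
have hi0' : (2 * nu <= i0)%N.
  rewrite leqNgt; apply/negP => h.
  by move: (hev i0 h); rewrite -par_unit // hi0.
rewrite par_unit // in hz; rewrite par_unit // in hi0.
clear hne; move: a i0 hi0 hi0' hev hQ; case: delta hd => [|[|[|d]]] // _ a i0 hi0 hi0' hev hQ.
- by move=> _; move: (ltn_ord i0) hi0'; lia.
- rewrite big_ord_recr big_ord0 /= big_ord_recr big_ord0 /=.
  have e : i0 = rshift (2 * nu) (ord_max : 'I_1).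
    apply: val_inj => /=; move: (ltn_ord i0) hi0'; lia.
  by rewrite -e hi0.
- rewrite !big_ord_recr !big_ord0 /= hz par0 par1.
  have [e|e] : i0 = rshift (2 * nu) (widen_ord (leqnSn 1) (ord_max : 'I_1) : 'I_2)
            \/ i0 = rshift (2 * nu) (ord_max : 'I_2).
    have := ltn_ord i0; move: hi0' => /= h1 h2.
    case: (ltnP i0 (2 * nu).+1) => h3; [left|right]; apply: val_inj => /=; lia.
  + by move: hi0; rewrite e => ->; case: (par _).
  + by move: hi0; rewrite e => ->; case: (par _).
Qed.
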